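(* Let $(\Gamma,M)$ be an E-GCM graph with Coxeter group $W$ acting on $V$ by the quasi-standard geometric representation. Fix $i\ne j$ in $I_n$ and a positive integer $k$. If $m_{ij}=\infty$, then $(s_is_j)^k.\alpha_i=a\alpha_i+b\alpha_j$ and $s_j(s_is_j)^k.\alpha_i=c\alpha_i+d\alpha_j$ with $a,b,c,d>0$. Now suppose $m_{ij}<\infty$. If $2k<m_{ij}$, then $(s_is_j)^k.\alpha_i=a\alpha_i+b\alpha_j$ with $a\ge0$, $b>0$; moreover this is a multiple of $\alpha_j$ if and only if $m_{ij}$ is odd and $k=(m_{ij}-1)/2$, in which case $(s_is_j)^k.\alpha_i=\frac{-M_{ji}}{2\cos(\pi/m_{ij})}\alpha_j$. If $2k<m_{ij}-1$, then $s_j(s_is_j)^k.\alpha_i=a\alpha_i+b\alpha_j$ with $a>0$, $b\ge0$; moreover this is a multiple of $\alpha_i$ if and only if $m_{ij}$ is even and $k=(m_{ij}-2)/2$, in which case $s_j(s_is_j)^k.\alpha_i=\alpha_i$.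
   Context: E-GCM $M=(M_{ij})_{i,j\in I_n}$: real, $M_{ii}=2$, $M_{ij}\le0$ ($i\ne j$), $M_{ij}\ne0\iff M_{ji}\ne0$, nonzero $M_{ij}M_{ji}$ either $\ge4$ or $=4\cos^2(\pi/m)$ with $m\ge3$ integer. $W$: generators $s_i$, $s_i^2=e$, $(s_is_j)^{m_{ij}}=e$, where $m_{ij}=k$ if $M_{ij}M_{ji}=4\cos^2(\pi/k)$ for an integer $k\ge2$ (so $m_{ij}=2$ iff $M_{ij}M_{ji}=0$) and $m_{ij}=\infty$ if $M_{ij}M_{ji}\ge4$. Quasi-standard geometric representation: $V$ real vector space with basis $(\alpha_i)$, $s_i.v=v-2B(\alpha_i,v)\alpha_i$ with $B(\alpha_i,\alpha_j)=\tfrac12M_{ij}$, i.e. $s_i.\alpha_j=\alpha_j-M_{ij}\alpha_i$. *)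

(* Defs.v *)
From HB Require Import structures.
From mathcomp Require Import all_boot all_order all_algebra.
From mathcomp Require Import all_classical all_reals.
From mathcomp Require Import trigo.
Set Implicit Arguments. Unset Strict Implicit. Unset Printing Implicit Defensive.
Import Order.TTheory GRing.Theory Num.Theory.
Local Open Scope ring_scope.

Definition is_EGCM (R : realType) (n : nat) (M : 'M[R]_n) : Prop :=
  (forall i, M i i = 2) /\
  (forall i j, i != j -> M i j <= 0) /\
  (forall i j, M i j != 0 <-> M j i != 0) /\
  (forall i j, i != j -> M i j * M j i != 0 ->
     4 <= M i j * M j i \/
     exists m : nat, (3 <= m)%N /\ M i j * M j i = 4 * (cos (pi / m%:R)) ^+ 2).

Definition mij_is (R : realType) (n : nat) (M : 'M[R]_n) (i j : 'I_n) (m : nat) : Prop :=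
  (2 <= m)%N /\ M i j * M j i = 4 * (cos (pi / m%:R)) ^+ 2.

Definition mij_inf (R : realType) (n : nat) (M : 'M[R]_n) (i j : 'I_n) : Prop :=
  4 <= M i j * M j i.

(* Quasi-standard geometric representation on V = R^n (row vectors),
   basis alpha_i = i-th unit vector. *)
Definition alpha (R : realType) (n : nat) (i : 'I_n) : 'rV[R]_n := delta_mx 0 i.

Definition Bform (R : realType) (n : nat) (M : 'M[R]_n) (i : 'I_n) (v : 'rV[R]_n) : R :=
  2^-1 * \sum_(j < n) M i j * v 0 j.

Definition srefl (R : realType) (n : nat) (M : 'M[R]_n) (i : 'I_n) (v : 'rV[R]_n)
  : 'rV[R]_n := v - (2 * Bform M i v) *: alpha R i.

Definition sisj_pow (R : realType) (n : nat) (M : 'M[R]_n) (i j : 'I_n) (k : nat)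
  (v : 'rV[R]_n) : 'rV[R]_n := iter k (fun w => srefl M i (srefl M j w)) v.

(* Main.v *)
Require Import Defs.
From HB Require Import structures.
From mathcomp Require Import all_boot all_order all_algebra.
From mathcomp Require Import all_classical all_reals.
From mathcomp Require Import trigo.
From mathcomp Require Import zify ring lra.
Import Order.TTheory GRing.Theory Num.Theory.
Local Open Scope ring_scope.

Lemma alpha_entry (R : realType) (n : nat) (i j l : 'I_n) (x y : R) :
  (x *: alpha R i + y *: alpha R j) 0 l = x * (l == i)%:R + y * (l == j)%:R.
Proof. by rewrite !mxE. Qed.

Lemma sum_delta (R : realType) (n : nat) (F : 'I_n -> R) (i : 'I_n) (x : R) :
  \sum_(l < n) F l * (x * (l == i)%:R) = F i * x.
Proof.
rewrite (bigD1 i) //= eqxx big1 => [|l /negbTE ->]; first by rewrite mulr1 addr0.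
by rewrite !mulr0.
Qed.

Lemma srefl_i (R : realType) (n : nat) (M : 'M[R]_n) (i j : 'I_n) (x y : R) :
  i != j -> M i i = 2 ->
  srefl M i (x *: alpha R i + y *: alpha R j) = (- x - M i j * y) *: alpha R i + y *: alpha R j.
Proof.
move=> hij Mii; rewrite /srefl /Bform.
have -> : \sum_(l < n) M i l * (x *: alpha R i + y *: alpha R j) 0 l = 2 * x + M i j * y.
  under eq_bigr => l _ do rewrite alpha_entry mulrDr.
  by rewrite big_split /= !sum_delta Mii.
rewrite mulrA mulfV ?mul1r; last by rewrite pnatr_eq0.
apply/rowP => l; rewrite mxE alpha_entry [in RHS]alpha_entry !mxE /=.
case: eqP => [->|_]; rewrite ?(negbTE hij) /=; ring.
Qed.

Lemma srefl_j (R : realType) (n : nat) (M : 'M[R]_n) (i j : 'I_n) (x y : R) :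
  i != j -> M j j = 2 ->
  srefl M j (x *: alpha R i + y *: alpha R j) = x *: alpha R i + (- y - M j i * x) *: alpha R j.
Proof.
move=> hij Mjj; rewrite addrC srefl_i 1?eq_sym // addrC //.
Qed.

Fixpoint XY {R : realType} (a b : R) (k : nat) : R * R :=
  match k with
  | 0 => (1, 0)
  | k'.+1 => let: (x, y) := XY a b k' in (- x + a * (b * x - y), b * x - y)
  end.

Lemma sisj_XY (R : realType) (n : nat) (M : 'M[R]_n) (i j : 'I_n) (k : nat) :
  i != j -> M i i = 2 -> M j j = 2 ->
  sisj_pow M i j k (alpha R i) =
  (XY (- M i j) (- M j i) k).1 *: alpha R i + (XY (- M i j) (- M j i) k).2 *: alpha R j.
Proof.
move=> hij Mii Mjj; elim: k => [|k IH] /=.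
  by rewrite scale1r scale0r addr0.
rewrite /sisj_pow /= -/(sisj_pow M i j k (alpha R i)) IH.
case: (XY _ _ k) => x y /=.
rewrite srefl_j // srefl_i //; congr (_ *: _ + _ *: _); ring.
Qed.

Fixpoint U {R : realType} (r : R) (n : nat) : R :=
  match n with
  | 0 => 0
  | n1.+1 => match n1 with 0 => 1 | n2.+1 => r * U r n1 - U r n2 end
  end.

Lemma U_SS (R : realType) (r : R) n : U r n.+2 = r * U r n.+1 - U r n.
Proof. by []. Qed.

Lemma XY_U (R : realType) (a b r : R) k : r ^+ 2 = a * b ->
  (XY a b k).1 = U r (2 * k).+1 /\ a * (XY a b k).2 = r * U r (2 * k).
Proof.
move=> hr; elim: k => [|k [IH1 IH2]]; first by split; rewrite /= ?mulr0.
change (XY a b k.+1) with (let: (x, y) := XY a b k in (- x + a * (b * x - y), b * x - y)).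
move: IH1 IH2; case: (XY a b k) => x y; cbv beta iota delta [fst snd]; move=> IH1 IH2.
have e1 : (2 * k.+1 = (2 * k).+2)%N by lia.
rewrite e1 !U_SS -IH1.
have h2 : a * (b * x - y) = r * (r * x - U r (2 * k)).
  transitivity (a * b * x - a * y); first ring.
  rewrite IH2 -hr; ring.
rewrite h2; split; ring.
Qed.

Lemma U_ge (R : realType) (r : R) : 2 <= r -> forall n,
  n%:R <= U r n /\ 1 <= U r n.+1 - U r n.
Proof.
move=> hr; elim=> [|n [IH1 IH2]]; first by rewrite /= subr0.
have h1 : n.+1%:R <= U r n.+1 by rewrite -natr1; lra.
split=> //.
rewrite U_SS.
have h0 : 0 <= U r n.+1 by apply: le_trans h1.
nra.
Qed.

Lemma U_sin (R : realType) (m : nat) : (2 <= m)%N -> forall n,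
  U (2 * cos (pi / m%:R)) n = sin (n%:R * (pi / m%:R)) / sin (pi / m%:R) :> R.
Proof.
move=> hm; set t := pi / m%:R.
have ht : 0 < sin t.
  apply: sin_gt0_pi; apply/andP; split.
    by rewrite divr_gt0 // ?pi_gt0 // ltr0n; lia.
  rewrite ltr_pdivrMr ?ltr0n; last lia.
  rewrite -subr_gt0 -[X in _ - X]mulr1 -mulrBr mulr_gt0 ?pi_gt0 // subr_gt0 ltr1n; lia.
suff: forall n, U (2 * cos t) n = sin (n%:R * t) / sin t /\
                U (2 * cos t) n.+1 = sin (n.+1%:R * t) / sin t by move=> h n; case: (h n).
elim=> [|n [IH1 IH2]].
  by rewrite /= !mul0r sin0 mul0r mul1r divff ?gt_eqF.
split=> //; rewrite U_SS IH1 IH2.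
have -> : n.+2%:R * t = n.+1%:R * t + t by rewrite -natr1 mulrDl mul1r.
have -> : n%:R * t = n.+1%:R * t - t by rewrite -natr1 mulrDl mul1r addrK.
rewrite sinB sinD; field; rewrite gt_eqF //.
Qed.

Lemma sin_t_gt0 (R : realType) (m : nat) : (2 <= m)%N -> 0 < sin (pi / m%:R) :> R.
Proof.
move=> hm; apply: sin_gt0_pi; apply/andP; split.
  by rewrite divr_gt0 // ?pi_gt0 // ltr0n; lia.
rewrite ltr_pdivrMr ?ltr0n; last lia.
rewrite -subr_gt0 -[X in _ - X]mulr1 -mulrBr mulr_gt0 ?pi_gt0 // subr_gt0 ltr1n; lia.
Qed.

Lemma nt_eq (R : realType) (m n : nat) : (0 < m)%N ->
  n%:R * (pi / m%:R) = pi * (n%:R / m%:R) :> R.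
Proof. by move=> hm; rewrite mulrA [_ * pi]mulrC -mulrA. Qed.

Lemma U_pos (R : realType) (m n : nat) : (2 <= m)%N -> (0 < n < m)%N ->
  0 < U (2 * cos (pi / m%:R)) n :> R.
Proof.
move=> hm hn; rewrite U_sin // divr_gt0 ?sin_t_gt0 //.
apply: sin_gt0_pi; rewrite nt_eq; last lia.
apply/andP; split.
  by rewrite mulr_gt0 ?pi_gt0 // divr_gt0 // ltr0n; lia.
rewrite -subr_gt0 -[X in X - _]mulr1 -mulrBr mulr_gt0 ?pi_gt0 // subr_gt0.
rewrite ltr_pdivrMr ?ltr0n ?mul1r ?ltr_nat; lia.
Qed.

Lemma U_m (R : realType) (m : nat) : (2 <= m)%N ->
  U (2 * cos (pi / m%:R)) m = 0 :> R.
Proof.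
move=> hm; rewrite U_sin // [m%:R * _]mulrC divfK ?sinpi ?mul0r // pnatr_eq0; lia.
Qed.

Lemma U_nonneg (R : realType) (m n : nat) : (2 <= m)%N -> (n <= m)%N ->
  0 <= U (2 * cos (pi / m%:R)) n :> R.
Proof.
move=> hm hn; case: (ltnP 0 n) => h0.
  case: (ltnP n m) => h1.
    by apply/ltW/U_pos => //; rewrite h0 h1.
  have -> : n = m by lia.
  by rewrite U_m.
have -> : n = 0%N by lia.
by [].
Qed.

Lemma U_m1 (R : realType) (m : nat) : (2 <= m)%N ->
  U (2 * cos (pi / m%:R)) (m - 1) = 1 :> R.
Proof.
move=> hm; rewrite U_sin // natrB; last lia.
rewrite mulrBl mul1r [m%:R * _]mulrC divfK ?pnatr_eq0; last lia.
by rewrite sinB sinpi cospi mul0r sub0r mulN1r opprK divff // gt_eqF // sin_t_gt0.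
Qed.

Lemma t_bounds (R : realType) (m : nat) : (2 <= m)%N ->
  0 < (pi : R) / m%:R /\ (pi : R) / m%:R <= pi / 2 /\ ((3 <= m)%N -> (pi : R) / m%:R < pi / 2).
Proof.
move=> hm; have hpi : 0 < pi :> R by exact: pi_gt0.
have hm0 : 0 < m%:R :> R by rewrite ltr0n; lia.
have hm2 : 2 <= m%:R :> R by rewrite (ler_nat R 2 m).
split; first by rewrite divr_gt0.
have e : pi / 2 = pi / 2 * m%:R / m%:R :> R by rewrite mulfK // gt_eqF.
rewrite e; split.
  rewrite ler_pM2r ?invr_gt0 //; nra.
move=> h3; have hm3 : 3 <= m%:R :> R by rewrite (ler_nat R 3 m).
rewrite ltr_pM2r ?invr_gt0 //; nra.
Qed.

Lemma cos_t_ge0 (R : realType) (m : nat) : (2 <= m)%N -> 0 <= cos (pi / m%:R) :> R.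
Proof.
move=> hm; have [h1 [h2 _]] := t_bounds R m hm.
apply: cos_ge0_pihalf; apply/andP; split => //.
have : 0 < pi / 2 :> R by rewrite divr_gt0 ?pi_gt0.
lra.
Qed.

Lemma cos_t_gt0 (R : realType) (m : nat) : (3 <= m)%N -> 0 < cos (pi / m%:R) :> R.
Proof.
move=> hm; have [h1 [_ h2]] := t_bounds R m (ltnW hm).
apply: cos_gt0_pihalf; apply/andP; split; last exact: h2.
have : 0 < pi / 2 :> R by rewrite divr_gt0 ?pi_gt0.
lra.
Qed.

Lemma XY_U2 (R : realType) (a b r : R) k : r ^+ 2 = a * b ->
  a * (b * (XY a b k).1 - (XY a b k).2) = r * U r (2 * k).+2.
Proof.
move=> hr; have [h1 h2] := XY_U R a b r k hr.
transitivity (a * b * (XY a b k).1 - a * (XY a b k).2); first ring.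
by rewrite h1 h2 -hr U_SS; ring.
Qed.

Lemma coef_eq (R : realType) (n : nat) (i j : 'I_n) (x y x' y' : R) : i != j ->
  x *: alpha R i + y *: alpha R j = x' *: alpha R i + y' *: alpha R j -> x = x' /\ y = y'.
Proof.
move=> hij e; have ei := congr1 (fun v : 'rV[R]_n => v 0 i) e; have ej := congr1 (fun v : 'rV[R]_n => v 0 j) e.
move: ei ej; rewrite /= !alpha_entry !eqxx (negbTE hij) eq_sym (negbTE hij) /=.
by move=> ei ej; split; [move: ei | move: ej]; rewrite !mulr0 ?addr0 ?add0r !mulr1.
Qed.

Arguments coef_eq {R n i j x y x' y'}.

Lemma odd_eq (m k : nat) : odd m -> k = ((m - 1) %/ 2)%N -> m = (2 * k).+1.
Proof. by move=> ho hk; move: (modn2 m); rewrite ho /=; lia. Qed.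

Lemma even_eq (m k : nat) : (2 <= m)%N -> ~~ odd m -> k = ((m - 2) %/ 2)%N -> m = (2 * k).+2.
Proof. by move=> h2 ho hk; move: (modn2 m); rewrite (negbTE ho) /=; lia. Qed.

Lemma odd2k1 k : odd (2 * k).+1.
Proof. by rewrite /= mul2n odd_double. Qed.

Lemma even2k2 k : ~~ odd (2 * k).+2.
Proof. by rewrite /= mul2n odd_double. Qed.

Theorem lemma4p2 (R : realType) (n : nat) (M : 'M[R]_n) (i j : 'I_n) (k : nat) :
  is_EGCM M -> i != j -> (0 < k)%N ->
  (mij_inf M i j ->
     (exists a b : R, 0 < a /\ 0 < b /\
        sisj_pow M i j k (alpha R i) = a *: alpha R i + b *: alpha R j) /\
     (exists c d : R, 0 < c /\ 0 < d /\
        srefl M j (sisj_pow M i j k (alpha R i)) = c *: alpha R i + d *: alpha R j)) /\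
  (forall m : nat, mij_is M i j m ->
     ((2 * k < m)%N ->
        (exists a b : R, 0 <= a /\ 0 < b /\
           sisj_pow M i j k (alpha R i) = a *: alpha R i + b *: alpha R j) /\
        ((exists c : R, sisj_pow M i j k (alpha R i) = c *: alpha R j) <->
           (odd m /\ k = ((m - 1) %/ 2)%N)) /\
        (odd m -> k = ((m - 1) %/ 2)%N ->
           sisj_pow M i j k (alpha R i)
             = (- M j i / (2 * cos (pi / m%:R))) *: alpha R j)) /\
     ((2 * k < m - 1)%N ->
        (exists a b : R, 0 < a /\ 0 <= b /\
           srefl M j (sisj_pow M i j k (alpha R i)) = a *: alpha R i + b *: alpha R j) /\
        ((exists c : R, srefl M j (sisj_pow M i j k (alpha R i)) = c *: alpha R i) <->
           (~~ odd m /\ k = ((m - 2) %/ 2)%N)) /\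
        (~~ odd m -> k = ((m - 2) %/ 2)%N ->
           srefl M j (sisj_pow M i j k (alpha R i)) = alpha R i))).
Proof.
move=> [Mdiag [Moff [Msym _]]] hij hk.
have Mii := Mdiag i; have Mjj := Mdiag j.
have ha0 : 0 <= - M i j by rewrite oppr_ge0 Moff.
have hb0 : 0 <= - M j i by rewrite oppr_ge0 Moff // eq_sym.
rewrite (@sisj_XY R n M i j k hij Mii Mjj) srefl_j //.
have eab : M i j * M j i = (- M i j) * (- M j i) by ring.
move: ha0 hb0 eab.
set a := - M i j; set b := - M j i.
set x := (XY a b k).1; set y := (XY a b k).2.
move=> ha0 hb0 eab.
have ey : - y - M j i * x = b * x - y by rewrite /b; ring.
rewrite ey.
split.
  rewrite /mij_inf eab => hab.
  set r := Num.sqrt (a * b).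
  have hr : r ^+ 2 = a * b by rewrite sqr_sqrtr //; lra.
  have hr0 : 0 <= r by exact: sqrtr_ge0.
  have hr2 : 2 <= r by nra.
  have ha : 0 < a by nra.
  have [hx hy] := XY_U R a b r k hr.
  have hz := XY_U2 R a b r k hr; rewrite -/x -/y in hx hy hz.
  have [u1 _] := U_ge R r hr2 (2 * k).+1.
  have [u2 _] := U_ge R r hr2 (2 * k).
  have [u3 _] := U_ge R r hr2 (2 * k).+2.
  have n1 : 1 <= (2 * k).+1%:R :> R by rewrite ler1n.
  have n2 : 1 <= (2 * k)%:R :> R by rewrite ler1n; lia.
  have n3 : 1 <= (2 * k).+2%:R :> R by rewrite ler1n.
  split.
    exists x, y; split; first by rewrite hx; lra.
    split => //; nra.
  exists x, (b * x - y); split; first by rewrite hx; lra.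
  split => //; nra.
move=> m [hm2 hprod].
set r := 2 * cos (pi / m%:R).
have hr : r ^+ 2 = a * b by rewrite -eab hprod /r; ring.
have [hx hy] := XY_U R a b r k hr.
have hz := XY_U2 R a b r k hr; rewrite -/x -/y in hx hy hz.
have pos3 : (3 <= m)%N -> 0 < r /\ 0 < a.
  move=> h3; have hc := cos_t_gt0 R m h3.
  have hr0 : 0 < r by rewrite /r; lra.
  split => //; nra.
split.
  move=> h2k; have [hr0 ha] := pos3 ltac:(lia).
  have hU2 : 0 < U r (2 * k) by apply: U_pos => //; lia.
  split.
    exists x, y; split; first by rewrite hx; apply: U_nonneg => //; lia.
    split => //; nra.
  split.
    split.
      move=> [c hc]; rewrite -[c *: _]add0r -(scale0r (alpha R i)) in hc.
      have [hx0 _] := coef_eq hij hc.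
      have hm : m = (2 * k).+1.
        case: (ltnP (2 * k).+1 m) => h; last lia.
        have hp : 0 < U r (2 * k).+1 by apply: U_pos => //; lia.
        by move: hp; rewrite -hx hx0 ltxx.
      by rewrite hm odd2k1; split => //; lia.
    move=> [ho hk']; have hm := odd_eq m k ho hk'.
    exists y; rewrite hx -hm U_m // scale0r add0r //.
  move=> ho hk'; have hm := odd_eq m k ho hk'.
  rewrite hx -hm U_m // scale0r add0r; congr (_ *: _).
  have hU : U r (m - 1) = 1 := U_m1 R m hm2.
  have e2 : (2 * k = m - 1)%N by lia.
  rewrite e2 hU mulr1 in hy.
  rewrite -/b -/r.
  rewrite -[y](mulKf (lt0r_neq0 ha)) hy -[b](mulKf (lt0r_neq0 ha)) -hr.
  by field; rewrite !gt_eqF.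
move=> h2k; have [hr0 ha] := pos3 ltac:(lia).
split.
  exists x, (b * x - y); split; first by rewrite hx; apply: U_pos => //; lia.
  split => //.
  have hU : 0 <= U r (2 * k).+2 by apply: U_nonneg => //; lia.
  nra.
split.
  split.
    move=> [c hc]; rewrite -[c *: _]addr0 -(scale0r (alpha R j)) in hc.
    have [_ hz0] := coef_eq hij hc.
    rewrite hz0 mulr0 in hz.
    have hm : m = (2 * k).+2.
      case: (ltnP (2 * k).+2 m) => h; last lia.
      have hU : 0 < U r (2 * k).+2 by apply: U_pos => //; lia.
      by move: hU; rewrite -(pmulr_rgt0 _ hr0) -hz ltxx.
    by rewrite hm even2k2; split => //; lia.
  move=> [ho hk']; have hm := even_eq m k hm2 ho hk'.
  exists x; rewrite -hm U_m // mulr0 in hz.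
  have -> : b * x - y = 0 by apply: (mulfI (lt0r_neq0 ha)); rewrite hz mulr0.
  by rewrite scale0r addr0.
move=> ho hk'; have hm := even_eq m k hm2 ho hk'.
rewrite -hm U_m // mulr0 in hz.
have -> : b * x - y = 0 by apply: (mulfI (lt0r_neq0 ha)); rewrite hz mulr0.
have e2 : ((2 * k).+1 = m - 1)%N by lia.
by rewrite scale0r addr0 hx e2 U_m1 // scale1r.
Qed.
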